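(* Let $A$ and $B$ be disjoint cubic graphs with $v(A)\equiv 2\pmod 6$ and $v(B)\equiv 4\pmod 6$, let $a=a_1a_2\in E(A)$ and $b=b_1b_2\in E(B)$, and suppose $B-b_1$ has no $\Lambda$-factor. Let $G=AabB$. Then $v(G)\equiv 0\pmod 6$ and $G$ has no $\Lambda$-factor avoiding the edge $a_2b_2$.
   Context: Graphs are finite, undirected, without loops or multiple edges; $v(G)=|V(G)|$. For disjoint graphs $A,B$ with $a=a_1a_2\in E(A)$, $b=b_1b_2\in E(B)$, $AabB$ is obtained from $(A-a)\cup(B-b)$ (edge deletions) by adding the new edges $a_1b_1$ and $a_2b_2$. $B-b_1$ denotes deletion of the vertex $b_1$. A $\Lambda$-factor of a graph is a spanning subgraph each of whose components is a path on 3 vertices; it avoids an edge $e$ if $e$ is not one of its edges. *)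

(* Defs.v *)
From mathcomp Require Import all_boot.
Set Implicit Arguments. Unset Strict Implicit. Unset Printing Implicit Defensive.

Definition simple_graph (T : finType) (e : rel T) : Prop :=
  symmetric e /\ irreflexive e.

Definition cubic (T : finType) (e : rel T) : Prop :=
  simple_graph e /\ forall x : T, #|[set y | e x y]| = 3.

(* The graph A a b B on the disjoint union TA + TB: delete a1a2 and b1b2,
   add a1b1 and a2b2. *)
Definition glue (TA TB : finType) (eA : rel TA) (eB : rel TB)
  (a1 a2 : TA) (b1 b2 : TB) : rel (TA + TB) :=
  fun u v => match u, v with
  | inl x, inl y => eA x y && ~~ (((x == a1) && (y == a2)) || ((x == a2) && (y == a1)))
  | inr x, inr y => eB x y && ~~ (((x == b1) && (y == b2)) || ((x == b2) && (y == b1)))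
  | inl x, inr y => ((x == a1) && (y == b1)) || ((x == a2) && (y == b2))
  | inr y, inl x => ((x == a1) && (y == b1)) || ((x == a2) && (y == b2))
  end.

Definition del_vertex (T : finType) (e : rel T) (v : T) : rel {x : T | x != v} :=
  fun x y => e (val x) (val y).
Arguments del_vertex {T} e v.

(* f is a Lambda-factor of the graph e: a spanning subgraph (edge relation f
   contained in e, symmetric) each of whose connected components is a path
   u - v - w on 3 distinct vertices. *)
Definition Lfactor (T : finType) (e f : rel T) : Prop :=
  symmetric f /\ subrel f e /\
  forall x : T, exists u v w : T,
    [/\ uniq [:: u; v; w],
        [set y | connect f x y] = [set u; v; w] &
        forall p q : T, p \in [set u; v; w] ->
          f p q = [|| (p == u) && (q == v), (p == v) && (q == u),
                      (p == v) && (q == w) | (p == w) && (q == v)]].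

Definition has_Lfactor (T : finType) (e : rel T) : Prop :=
  exists f : rel T, Lfactor e f.

(* Main.v *)
Require Import Defs.
From mathcomp Require Import all_boot zify.
Set Implicit Arguments. Unset Strict Implicit. Unset Printing Implicit Defensive.

Lemma card3 (T : finType) (u v w : T) : uniq [:: u; v; w] -> #|[set u; v; w]| = 3.
Proof.
rewrite /= !inE !andbT negb_or => /andP[/andP[uv uw] vw].
by rewrite -setUA cardsU1 cards2 !inE (negbTE uv) (negbTE uw) vw.
Qed.

Lemma in3 (T : finType) (u v w p q r t : T) : uniq [:: u; v; w] ->
  p \in [set u; v; w] -> q \in [set u; v; w] -> r \in [set u; v; w] ->
  uniq [:: p; q; r] -> t \in [set u; v; w] -> t \in [set p; q; r].
Proof.
move=> uq hp hq hr uq' ht.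
have sub : [set p; q; r] \subset [set u; v; w].
  by apply/subsetP => z /setUP [/set2P [] | /set1P] ->.
have -> : [set p; q; r] = [set u; v; w] by apply/eqP; rewrite eqEcard sub card3 ?card3.
exact: ht.
Qed.

Lemma closed_conn (T : finType) (f : rel T) (S : {set T}) x y :
  (forall x y, x \in S -> f x y -> y \in S) -> x \in S -> connect f x y -> y \in S.
Proof.
move=> cl xS /connectP [p pp ->].
elim: p x xS pp => [|z p IH] x xS //= /andP [fxz pp].
apply: IH pp; exact: cl fxz.
Qed.

Lemma closed3 (T : finType) (e f : rel T) (S : {set T}) : Lfactor e f ->
  (forall x y, x \in S -> f x y -> y \in S) -> 3 %| #|S|.
Proof.
move=> [fs [_ fc]] cl.
have cs : connect_sym f := sym_connect_sym fs.
have eqv : {in S & &, equivalence_rel (connect f)}.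
  move=> x y z _ _ _; split; first exact: connect0.
  by move=> cxy; apply: (same_connect cs cxy).
rewrite (card_partition (equivalence_partitionP eqv)).
apply: dvdn_sum => B /imsetP [x xS ->].
have -> : [set y in S | connect f x y] = [set y | connect f x y].
  by apply/setP => y; rewrite !inE; apply/andb_idl => /(closed_conn cl xS).
have [u [v [w [uq -> _]]]] := fc x.
by rewrite card3.
Qed.

Lemma inl_inj' (A B : Type) : injective (@inl A B).
Proof. by move=> x y []. Qed.
Lemma inr_inj' (A B : Type) : injective (@inr A B).
Proof. by move=> x y []. Qed.

Theorem mainTheorem12 (TA TB : finType) (eA : rel TA) (eB : rel TB)
  (a1 a2 : TA) (b1 b2 : TB) :
  cubic eA -> cubic eB ->
  #|TA| %% 6 = 2 -> #|TB| %% 6 = 4 ->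
  eA a1 a2 -> eB b1 b2 ->
  ~ has_Lfactor (del_vertex eB b1) ->
  #|{: TA + TB}| %% 6 = 0 /\
  ~ (exists f : rel (TA + TB),
       Lfactor (glue eA eB a1 a2 b1 b2) f /\ ~~ f (inl a2) (inr b2)).
Proof.
move=> _ _ hA hB _ _ hnB; split; first by rewrite card_sum; lia.
move=> [f [hL na]]; have [fs [fsub fc]] := hL.
have cross : forall x y, f (inl x) (inr y) -> x = a1 /\ y = b1.
  move=> x y fxy; have := fsub _ _ fxy; rewrite /=.
  case/orP => /andP [/eqP ex /eqP ey] //; subst.
  by rewrite fxy in na.
have crossr : forall x y, f (inr y) (inl x) -> x = a1 /\ y = b1.
  by move=> x y; rewrite fs; exact: cross.
case: (boolP (f (inl a1) (inr b1))) => f11; last first.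
  have : 3 %| #|[set inr y | y in [set: TB]] : {set TA + TB}|.
    apply: (closed3 hL) => t z /imsetP [y _ ->].
    case: z => [x|y'] fyz; last by apply/imsetP; exists y'.
    have [ex ey] := crossr _ _ fyz; subst.
    by rewrite fs fyz in f11.
  rewrite card_imset ?cardsT; last exact: inr_inj'.
  by move/dvdnP => [k hk]; lia.
have [u [v [w [uq eC pat]]]] := fc (inl a1).
have Cconn : forall y z, y \in [set u; v; w] -> f y z -> z \in [set u; v; w].
  move=> y z; rewrite -eC !inE => cy fyz; exact: connect_trans cy (connect1 fyz).
have Cconn' : forall y z, y \in [set u; v; w] -> f z y -> z \in [set u; v; w].
  by move=> y z cy; rewrite fs; apply: Cconn.
have Ca1 : inl a1 \in [set u; v; w] by rewrite -eC inE connect0.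
have Cb1 : inr b1 \in [set u; v; w] by rewrite -eC inE connect1.
case: (pickP [pred y | (y != b1) && (inr y \in [set u; v; w])]) => [y0 /andP [y0b Cy0] | noy].
  have : 3 %| #|[set inl y | y in [set~ a1]] : {set TA + TB}|.
    apply: (closed3 hL) => t z /imsetP [y]; rewrite in_setC1 => ya ->.
    case: z => [x|y'] fyz; last first.
      by have [ex _] := cross _ _ fyz; rewrite ex eqxx in ya.
    apply/imsetP; exists x => //; rewrite in_setC1.
    apply/negP => /eqP ex; subst x.
    have Cy := Cconn' _ _ Ca1 fyz.
    have uq3 : uniq [:: inl a1; inr b1; inr y0 : TA + TB].
      rewrite /= !inE andbT.
      by apply/eqP => -[e]; rewrite e eqxx in y0b.
    have := in3 uq Ca1 Cb1 Cy0 uq3 Cy.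
    rewrite !inE; case/orP => [/orP []|] /eqP // -[e].
    by rewrite e eqxx in ya.
  rewrite card_imset ?cardsC1; last exact: inl_inj'.
  by move/dvdnP => [k hk]; lia.
pose SB := [set inr y | y in [set~ b1]] : {set TA + TB}.
have clB : forall t z, t \in SB -> f t z -> z \in SB.
  move=> t z /imsetP [y]; rewrite in_setC1 => yb ->.
  case: z => [x|y'] fyz.
    by have [_ ey] := crossr _ _ fyz; rewrite ey eqxx in yb.
  apply/imsetP; exists y' => //; rewrite in_setC1; apply/negP => /eqP ey; subst y'.
  have Cy := Cconn' _ _ Cb1 fyz.
  by have := noy y; rewrite /= yb Cy.
pose g := fun x y : {x : TB | x != b1} => f (inr (val x)) (inr (val y)).
have hS : forall t : {x : TB | x != b1}, inr (val t) \in SB.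
  by move=> t; apply/imsetP; exists (val t); rewrite ?in_setC1 ?(valP t).
have hc : forall x y, connect g x y = connect f (inr (val x)) (inr (val y)).
  move=> x y; apply/idP/idP.
    case/connectP => p pp ->.
    elim: p x pp => [|z p IH] x1 /=; first by move=> _; exact: connect0.
    by case/andP => gz pp; apply: connect_trans (connect1 _) (IH _ pp); exact: gz.
  case/connectP => p pp ey.
  elim: p x pp ey => [|z p IH] x1 /=.
    move=> _ ey; have e := inr_inj' ey; rewrite (val_inj e); exact: connect0.
  case/andP => fz pp ey.
  have := clB _ _ (hS x1) fz; case/imsetP => z0; rewrite in_setC1 => z0b ez; subst z.
  apply: (connect_trans (connect1 (_ : g x1 (exist _ z0 z0b)))) => //.
  exact: (IH (exist _ z0 z0b) pp ey).
have heq : forall a b : {x : TB | x != b1}, (a == b) = (inr (val a) == inr (val b) :> TA + TB).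
  by move=> a b; rewrite (inj_eq (@inr_inj' TA TB)) (inj_eq val_inj).
apply: hnB; exists g; split; first by move=> x y; rewrite /g fs.
split.
  by move=> x y /fsub; rewrite /del_vertex /=; case/andP.
move=> x.
have [u' [v' [w' [uq' eD pat']]]] := fc (inr (val x)).
have inD : forall t, t \in [set u'; v'; w'] -> exists t0 : {x : TB | x != b1}, t = inr (val t0).
  move=> t; rewrite -eD inE => /(closed_conn clB (hS x)) /imsetP [t0].
  by rewrite in_setC1 => t0b ->; exists (exist _ t0 t0b).
have [u0 eu] := inD u' (ltac:(by rewrite !inE eqxx)).
have [v0 ev] := inD v' (ltac:(by rewrite !inE eqxx orbT)).
have [w0 ew] := inD w' (ltac:(by rewrite !inE eqxx orbT)).
subst u' v' w'.
exists u0, v0, w0; split.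
- rewrite -(map_inj_uniq val_inj) -(map_inj_uniq (@inr_inj' TA TB)); exact: uq'.
- apply/setP => y; rewrite !inE hc.
  move/setP/(_ (inr (val y))): eD; rewrite !inE => <-.
  done.
- move=> p q hp.
  rewrite /g pat'; first by rewrite !heq.
  by move: hp; rewrite !inE !heq.
Qed.
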